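(* There is no simple complex abelian surface $A$ with $\mathfrak{d}_A=3$.
   Context: If $A$ is a complex abelian surface with period matrix $(\tau\ \ I_2)$, $\tau=(\tau_{ij})\in M_2(\mathbb{C})$, $\det\operatorname{Im}\tau\ne0$ (i.e. $A=\mathbb{C}^2/\Lambda$ with $\Lambda$ generated by the columns), then $\mathfrak{d}_A=[\mathbb{Q}(\{\tau_{ij}\}):\mathbb{Q}]$; this does not depend on the choice of such period matrix. *)

(* Defs.v *)
From HB Require Import structures.
From mathcomp Require Import all_boot all_order all_algebra.
From mathcomp Require Import reals.
From mathcomp.real_closed Require Import complex.
Set Implicit Arguments. Unset Strict Implicit. Unset Printing Implicit Defensive.
Import Order.TTheory GRing.Theory Num.Theory.
Local Open Scope ring_scope.

Section AbSurf.
Variable R : realType.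
Local Notation C := (R[i]).

Definition cvec := 'cV[C]_2.

(* The lattice Lambda generated by the columns of the period matrix (tau I_2):
   m1 tau_{.1} + m2 tau_{.2} + m3 e_1 + m4 e_2 with m : Z^4. *)
Definition lattice_pt (tau : 'M[C]_2) (m : 'I_4 -> int) : cvec :=
  (m 0%R)%:~R *: col 0 tau + (m 1%R)%:~R *: col 1 tau
  + (m 2%R)%:~R *: delta_mx 0 0 + (m 3%R)%:~R *: delta_mx 1 0.

Definition in_lattice (tau : 'M[C]_2) (v : cvec) : Prop :=
  exists m : 'I_4 -> int, v = lattice_pt tau m.

(* (tau I_2) is a period matrix of a complex torus: det Im tau <> 0 *)
Definition period_matrix_ok (tau : 'M[C]_2) : Prop :=
  \det (map_mx (fun z : C => 'Im z) tau) != 0.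

Definition hform (H : 'M[C]_2) (v w : cvec) : C :=
  ((map_mx Num.conj v)^T *m H *m w) 0 0.

(* The torus C^2/Lambda is an abelian surface: it carries a polarization,
   i.e. a positive definite Hermitian form H whose imaginary part is
   integer valued on Lambda x Lambda (Riemann conditions). *)
Definition is_abelian_surface (tau : 'M[C]_2) : Prop :=
  period_matrix_ok tau /\
  exists H : 'M[C]_2,
    map_mx Num.conj H^T = H /\
    (forall v : cvec, v != 0 -> 0 < hform H v v) /\
    (forall v w : cvec, in_lattice tau v -> in_lattice tau w ->
        exists k : int, 'Im (hform H v w) = k%:~R).

(* A has a one-dimensional complex subtorus: a complex line in C^2 meeting
   Lambda in a rank-2 lattice, i.e. two R-linearly independent lattice vectors
   that are C-linearly dependent. *)
Definition has_elliptic_subtorus (tau : 'M[C]_2) : Prop :=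
  exists v w : cvec, in_lattice tau v /\ in_lattice tau w /\
    \det (row_mx v w) = 0 /\
    (forall a b : R, (a%:C)%C *: v + (b%:C)%C *: w = 0 -> a = 0 /\ b = 0).

(* Simple abelian surface: its only abelian subvarieties are 0 and A, i.e.
   it has no 1-dimensional complex subtorus. *)
Definition simple_abelian_surface (tau : 'M[C]_2) : Prop :=
  is_abelian_surface tau /\ ~ has_elliptic_subtorus tau.

Definition is_subfield (K : C -> Prop) : Prop :=
  K 1 /\ (forall x y, K x -> K y -> K (x - y)) /\
  (forall x y, K x -> K y -> K (x * y)) /\ (forall x, K x -> K x^-1).

Definition gen_field (S : C -> Prop) (x : C) : Prop :=
  forall K, is_subfield K -> (forall s, S s -> K s) -> K x.

Definition field_degree_eq (S : C -> Prop) (n : nat) : Prop :=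
  exists b : 'I_n -> C,
    (forall i, gen_field S (b i)) /\
    (forall q : 'I_n -> rat, \sum_i ratr (q i) * b i = 0 -> forall i, q i = 0) /\
    (forall x, gen_field S x -> exists q : 'I_n -> rat, x = \sum_i ratr (q i) * b i).

Definition entries (tau : 'M[C]_2) (z : C) : Prop := exists i j, z = tau i j.

Definition dA_eq (tau : 'M[C]_2) (n : nat) : Prop := field_degree_eq (entries tau) n.

End AbSurf.

(* Main.v *)
Require Import Defs.
From HB Require Import structures.
From mathcomp Require Import all_boot all_order all_algebra.
From mathcomp Require Import reals.
From mathcomp.real_closed Require Import complex.
From mathcomp Require Import ring.
Set Implicit Arguments. Unset Strict Implicit. Unset Printing Implicit Defensive.
Import Order.TTheory GRing.Theory Num.Theory.
Local Open Scope ring_scope.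
Lemma exists_sol_rat (I J : finType) (g : J -> I -> rat) : (#|J| < #|I|)%N ->
  exists x : I -> rat, (exists i, x i != 0) /\ forall j, \sum_i x i * g j i = 0.
Proof.
move=> ltJI.
pose A : 'M[rat]_(#|I|, #|J|) := \matrix_(k, l) g (enum_val l) (enum_val k).
have nzK : kermx A != 0.
  rewrite -mxrank_eq0 mxrank_ker subn_eq0 -ltnNge.
  exact: leq_ltn_trans (rank_leq_col A) ltJI.
have [k0 [l0 nz]] : exists k0 l0, kermx A k0 l0 != 0.
  suff /existsP[k0 /existsP[l0 nz]] : [exists k, exists l, kermx A k l != 0].
    by exists k0, l0.
  apply: contraNT nzK => /existsPn H; apply/eqP/matrixP => k l; rewrite [RHS]mxE.
  by move: (H k) => /existsPn /(_ l); rewrite negbK => /eqP.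
pose u := row k0 (kermx A).
have uA : u *m A = 0 by rewrite /u -row_mul mulmx_ker row0.
exists (fun i => u 0 (enum_rank i)); split.
  by exists (enum_val l0); rewrite enum_valK mxE.
clearbody u; move=> j.
rewrite (reindex (@enum_val I (pred_of_simpl predT))) /=; last first.
  by exists (@enum_rank I) => x _; [rewrite enum_valK | rewrite enum_rankK].
transitivity ((u *m A) 0 (enum_rank j)); last by rewrite uA mxE.
rewrite mxE; apply: eq_bigr => k _; rewrite !mxE enum_valK enum_rankK //.
Qed.

Lemma exists_sol (I J : finType) (g : J -> I -> rat) : (#|J| < #|I|)%N ->
  exists x : I -> int, (exists i, x i != 0) /\ forall j, \sum_i (x i)%:~R * g j i = 0.
Proof.
move=> /(exists_sol_rat g) [xq [[i0 nz0] Hs]].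
pose D : rat := \prod_i (denq (xq i))%:~R.
have D0 : D != 0 by apply/prodf_neq0 => i _; rewrite intr_eq0 denq_neq0.
exists (fun i => numq (xq i) * \prod_(i' | i' != i) denq (xq i')).
have E i : (numq (xq i) * \prod_(i' | i' != i) denq (xq i'))%:~R = xq i * D.
  have -> : D = (denq (xq i))%:~R * \prod_(i'|i'!=i) (denq (xq i'))%:~R.
    by rewrite /D (bigD1 i).
  by rewrite intrM numqE rmorph_prod mulrA.
split.
  exists i0; rewrite -(intr_eq0 rat) E mulf_neq0 //.
move=> j; under eq_bigr do rewrite E.
transitivity (D * \sum_i xq i * g j i); last by rewrite Hs mulr0.
rewrite mulr_sumr; apply: eq_bigr => i _.
by rewrite mulrA (mulrC D).
Qed.

Lemma det2 (F : comNzRingType) (A : 'M[F]_2) : \det A = A 0 0 * A 1 1 - A 0 1 * A 1 0.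
Proof.
rewrite (expand_det_row _ 0) !big_ord_recl big_ord0 /cofactor !det_mx11 !mxE /=.
have -> : lift 0 (0 : 'I_1) = 1 :> 'I_2 by apply: val_inj.
have -> : lift 1 (0 : 'I_1) = 0 :> 'I_2 by apply: val_inj.
have -> : ord0 = 0 :> 'I_2 by apply: val_inj.
rewrite /bump /= expr0 expr1 addr0 mul1r mulN1r mulrN.
done.
Qed.

Lemma ord4_ind (P : 'I_4 -> Prop) : P 0 -> P 1 -> P 2 -> P 3 -> forall l, P l.
Proof.
move=> p0 p1 p2 p3 [[|[|[|[|n]]]] hn].
- by have -> : Ordinal hn = 0 by apply: val_inj.
- by have -> : Ordinal hn = 1 by apply: val_inj.
- by have -> : Ordinal hn = 2 by apply: val_inj.
- by have -> : Ordinal hn = 3 by apply: val_inj.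
- by [].
Qed.

Section Main.
Variable R : realType.
Local Notation C := (R[i]).
Variable b : 'I_3 -> C.
Hypothesis indep : forall q : 'I_3 -> rat, \sum_i ratr (q i) * b i = 0 -> forall i, q i = 0.

Definition lc (q : 'I_3 -> rat) : C := \sum_k ratr (q k) * b k.

Lemma lc_lin (I : finType) (a : I -> rat) (q : I -> 'I_3 -> rat) :
  lc (fun k => \sum_l a l * q l k) = \sum_l ratr (a l) * lc (q l).
Proof.
rewrite /lc; under eq_bigr do rewrite rmorph_sum /= mulr_suml.
rewrite exchange_big; apply: eq_bigr => l _; rewrite mulr_sumr.
by apply: eq_bigr => k _; rewrite rmorphM /= mulrA.
Qed.

Lemma lc_eq q q' : (forall k, q k = q' k) -> lc q = lc q'.
Proof. by move=> E; apply: eq_bigr => k _; rewrite E. Qed.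

Lemma lc_inj q q' : lc q = lc q' -> forall k, q k = q' k.
Proof.
move=> E k; apply/eqP; rewrite -subr_eq0; apply/eqP; apply: (indep (q := fun k => q k - q' k)).
rewrite -[RHS](subrr (lc q)) {2}E /lc -sumrB; apply: eq_bigr => i _.
by rewrite rmorphB /= mulrBl.
Qed.

Lemma lc0 : lc (fun=> 0) = 0.
Proof. by rewrite /lc big1 // => k _; rewrite rmorph0 mul0r. Qed.

Lemma lc_neq0 q : (exists k, q k != 0) -> lc q != 0.
Proof.
move=> [k nz]; apply: contra nz => /eqP E; apply/eqP.
by rewrite (@lc_inj q (fun=> 0)) // lc0.
Qed.

Variable c : 'I_3 -> 'I_3 -> 'I_3 -> rat.
Hypothesis Hc : forall i j, b i * b j = lc (c i j).

Lemma lc_mul y v : lc y * lc v = lc (fun k => \sum_i y i * \sum_j v j * c i j k).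
Proof.
rewrite lc_lin.
under [RHS]eq_bigr do rewrite lc_lin.
rewrite {1}/lc mulr_suml; apply: eq_bigr => i _.
rewrite -mulrA; congr (_ * _).
under [RHS]eq_bigr do rewrite -Hc.
by rewrite /lc mulr_sumr; apply: eq_bigr => j _; rewrite mulrCA.
Qed.


Lemma lc_scale a q : lc (fun k => a * q k) = ratr a * lc q.
Proof. by rewrite /lc mulr_sumr; apply: eq_bigr => k _; rewrite rmorphM mulrA. Qed.

Variable tau : 'M[C]_2.
Variable t : 'I_2 -> 'I_2 -> 'I_3 -> rat.
Hypothesis Ht : forall r s, tau r s = lc (t r s).
Variable e : 'I_3 -> rat.
Hypothesis He : 1 = lc e.

Definition PiE (l : 'I_4) (r : 'I_2) (k : 'I_3) : rat :=
  match val l with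
  | 0 => t r 0 k | 1 => t r 1 k | 2 => (r == 0)%:R * e k | _ => (r == 1)%:R * e k end.

Lemma lat_entry m r : lattice_pt tau m r 0 = lc (fun k => \sum_l (m l)%:~R * PiE l r k).
Proof.
rewrite lc_lin !big_ord_recl big_ord0 addr0 /= /PiE /= !lc_scale -!He -!Ht.
rewrite /lattice_pt !mxE /= !ratr_int.
have -> : lift ord0 ord0 = 1 :> 'I_4 by apply/val_inj.
have -> : lift ord0 (lift ord0 ord0) = 2 :> 'I_4 by apply/val_inj.
have -> : lift ord0 (lift ord0 (lift ord0 ord0)) = 3 :> 'I_4 by apply/val_inj.
have -> : ord0 = 0 :> 'I_4 by apply/val_inj.
by rewrite !eqxx !andbT !rmorph_nat !mulr1 !addrA.
Qed.


Variables (xi w : 'I_2 * 'I_3 -> rat) (p0 : 'I_2 * 'I_3).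
Hypothesis xi0 : xi p0 != 0.
Hypothesis H1 : forall l, \sum_p xi p * PiE l p.1 p.2 = 0.
Hypothesis H2 : forall i, \sum_p w p * \sum_k xi (p.1, k) * c i p.2 k = 0.
Hypothesis wnz : exists p, w p != 0.

Definition vv r := lc (fun j => w (r, j)).

Lemma swap_sum i : \sum_q xi q * \sum_j w (q.1, j) * c i j q.2 =
   \sum_p w p * \sum_k xi (p.1, k) * c i p.2 k.
Proof.
transitivity (\sum_q xi (q.1, q.2) * \sum_j w (q.1, j) * c i j q.2).
  by apply: eq_bigr => -[].
rewrite -(pair_bigA _ (fun r k => xi (r, k) * \sum_j w (r, j) * c i j k)).
transitivity (\sum_p (fun r j => w (r, j) * \sum_k xi (r, k) * c i j k) p.1 p.2); last first.
  by apply: eq_bigr => -[].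
rewrite -(pair_bigA _ (fun r j => w (r, j) * \sum_k xi (r, k) * c i j k)).
apply: eq_bigr => r _; under eq_bigr do rewrite mulr_sumr.
rewrite exchange_big; apply: eq_bigr => j _; rewrite mulr_sumr.
by apply: eq_bigr => k _; rewrite mulrCA.
Qed.

Lemma step3 (ex : 'I_4 -> rat) : exists m : 'I_4 -> int, exists lam : C,
  (exists l, m l != 0) /\ (forall r, lattice_pt tau m r 0 = lam * vv r) /\
  \sum_l (m l)%:~R * ex l = 0.
Proof.
pose g (q : 'I_2 * 'I_3) (z : 'I_4 + 'I_3) : rat :=
  match z with inl l => if q == p0 then ex l else PiE l q.1 q.2
  | inr i => if q == p0 then 0 else - \sum_j w (q.1, j) * c i j q.2 end.
have [z [znz Hz]] : exists z : 'I_4 + 'I_3 -> int, (exists i, z i != 0) /\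
    forall q, \sum_i (z i)%:~R * g q i = 0.
  by apply: exists_sol; rewrite card_prod card_sum !card_ord.
pose m l := z (inl l). pose y i := (z (inr i))%:~R : rat.
have Hz' q : \sum_l (m l)%:~R * g q (inl l) + \sum_i y i * g q (inr i) = 0.
  by have := Hz q; rewrite big_sumType.
pose F q := \sum_l (m l)%:~R * PiE l q.1 q.2 - \sum_i y i * \sum_j w (q.1, j) * c i j q.2.
have HF q : q != p0 -> F q = 0.
  move=> hq; have := Hz' q; rewrite /g (negbTE hq) /F.
  by under [X in _ + X]eq_bigr do rewrite mulrN; rewrite sumrN.
have Hsum : \sum_q xi q * F q = 0.
  rewrite /F; under eq_bigr do rewrite mulrBr; rewrite sumrB.
  apply/eqP; rewrite subr_eq0; apply/eqP.
  under eq_bigr do rewrite mulr_sumr; rewrite exchange_big.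
  under [RHS]eq_bigr do rewrite mulr_sumr; rewrite [RHS]exchange_big.
  rewrite big1 ?[RHS]big1 // => i _.
    rewrite (eq_bigr (fun q => y i * (xi q * \sum_j w (q.1, j) * c i j q.2))).
      by rewrite -mulr_sumr swap_sum H2 mulr0.
    by move=> q _; rewrite mulrCA.
  rewrite (eq_bigr (fun q => (m i)%:~R * (xi q * PiE i q.1 q.2))).
    by rewrite -mulr_sumr H1 mulr0.
  by move=> q _; rewrite mulrCA.
have F0 q : F q = 0.
  case: (eqVneq q p0) => [->|]; last exact: HF.
  move: Hsum; rewrite (bigD1 p0) //= big1 ?addr0.
    by move/eqP; rewrite mulf_eq0 (negbTE xi0) /= => /eqP.
  by move=> q' hq'; rewrite HF ?mulr0.
have Hl r : lattice_pt tau m r 0 = lc y * vv r.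
  rewrite lat_entry /vv lc_mul; apply: lc_eq => k.
  by apply/eqP; rewrite -subr_eq0; apply/eqP; exact: (F0 (r, k)).
exists m, (lc y); split; last split => //.
  case: (boolP [exists l, m l != 0]) => [/existsP//|/existsPn Hm].
  exfalso.
  have m0 l : m l = 0 by apply/eqP; move: (Hm l); rewrite negbK.
  have Ly : lc y = 0.
    case: wnz => [[r j] wrj].
    have : lc y * vv r = 0.
      rewrite -Hl lat_entry (@lc_eq _ (fun=> 0)) ?lc0 // => k.
      by rewrite big1 // => l _; rewrite m0 mul0r.
    move/eqP; rewrite mulf_eq0 => /orP[/eqP//|].
    by rewrite /vv (negbTE (lc_neq0 (ex_intro _ j wrj))).
  case: znz => [[l|i]]; first by rewrite -/(m l) m0 eqxx.
  have := @lc_inj y (fun=> 0); rewrite lc0 => /(_ Ly i) /eqP.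
  by rewrite /y intr_eq0 => ->.
have := Hz' p0; rewrite /g eqxx.
by under [X in _ + X]eq_bigr do rewrite mulr0; rewrite big1_eq addr0.
Qed.

End Main.

Lemma latE (R : realType) (tau : 'M[R[i]]_2) m r : lattice_pt tau m r 0 =
  (m 0)%:~R * tau r 0 + (m 1)%:~R * tau r 1 + (m 2)%:~R * (r == 0)%:R
  + (m 3)%:~R * (r == 1)%:R.
Proof. by rewrite /lattice_pt !mxE /= !eqxx !andbT. Qed.

Lemma im_indep (R : realType) (tau : 'M[R[i]]_2) : period_matrix_ok tau ->
  forall al be : R[i], al \is Num.real -> be \is Num.real ->
  (forall r, 'Im (al * tau r 0 + be * tau r 1) = 0) -> al = 0 /\ be = 0.
Proof.
rewrite /period_matrix_ok det2 !mxE => dn al be ral rbe H.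
have E r : al * 'Im (tau r 0) + be * 'Im (tau r 1) = 0.
  by rewrite -(H r) raddfD /= !ImMl.
have E0 := E 0; have E1 := E 1.
set d := _ - _ in dn.
have A : al * d = 'Im (tau 1 1) * (al * 'Im (tau 0 0) + be * 'Im (tau 0 1))
   - 'Im (tau 0 1) * (al * 'Im (tau 1 0) + be * 'Im (tau 1 1)) by rewrite /d; ring.
have B : be * d = 'Im (tau 0 0) * (al * 'Im (tau 1 0) + be * 'Im (tau 1 1))
   - 'Im (tau 1 0) * (al * 'Im (tau 0 0) + be * 'Im (tau 0 1)) by rewrite /d; ring.
rewrite E0 E1 !mulr0 subrr in A B.
by split; apply/eqP; [move/eqP: A | move/eqP: B]; rewrite mulf_eq0 (negbTE dn) orbF.
Qed.

Theorem mainTheorem10 (R : realType) (tau : 'M[R[i]]_2) :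
  simple_abelian_surface tau -> ~ dA_eq tau 3.
Proof.
move=> [[pm _] nosub] [b [Kb [indep span]]]; apply: nosub.
pose K := gen_field (entries tau).
have Kmul x y : K x -> K y -> K (x * y).
  move=> Hx Hy F HF FS; have [_ [_ [FM _]]] := HF; exact: FM _ _ (Hx F HF FS) (Hy F HF FS).
have K1 : K 1 by move=> F [F1 _] _.
have Kt r s : K (tau r s) by move=> F _ FS; apply: FS; exists r, s.
have [t Ht] : exists t : 'I_2 -> 'I_2 -> 'I_3 -> rat, forall r s, tau r s = lc b (t r s).
  apply: (@fin_all_exists _ (fun _ => 'I_2 -> 'I_3 -> rat)
     (fun r f => forall s, tau r s = lc b (f s))) => r.
  apply: (@fin_all_exists _ (fun _ => 'I_3 -> rat)
     (fun s f => tau r s = lc b f)) => s; exact: span _ (Kt r s).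
have [e He] : exists e : 'I_3 -> rat, 1 = lc b e by exact: span _ K1.
have [c Hc] : exists c : 'I_3 -> 'I_3 -> 'I_3 -> rat, forall i j, b i * b j = lc b (c i j).
  apply: (@fin_all_exists _ (fun _ => 'I_3 -> 'I_3 -> rat)
     (fun i f => forall j, b i * b j = lc b (f j))) => i.
  apply: (@fin_all_exists _ (fun _ => 'I_3 -> rat)
     (fun j f => b i * b j = lc b f)) => j.
  exact: span _ (Kmul _ _ (Kb i) (Kb j)).
have [xi' [[p0 xi0'] H1']] := @exists_sol _ _ (fun l (p : 'I_2 * 'I_3) => PiE t e l p.1 p.2)
  ltac:(by rewrite card_prod !card_ord).
pose xi p : rat := (xi' p)%:~R.
have xi0 : xi p0 != 0 by rewrite /xi intr_eq0.
have [w' [[pw wnz'] H2']] := @exists_sol _ _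
  (fun i (p : 'I_2 * 'I_3) => \sum_k xi (p.1, k) * c i p.2 k)
  ltac:(by rewrite card_prod !card_ord).
pose w p : rat := (w' p)%:~R.
have wnz : exists p, w p != 0 by exists pw; rewrite /w intr_eq0.
have [m [lam [[l0 ml0] [Hl _]]]] := step3 indep Hc Ht He xi0 H1' H2' wnz (fun=> 0).
have [m' [lam' [[l1 ml1] [Hl' Hex]]]] :=
  step3 indep Hc Ht He xi0 H1' H2' wnz (fun l => (l == l0)%:R).
have m'0 : m' l0 = 0.
  move: Hex; rewrite (bigD1 l0) //= big1 ?addr0 => [|l hl]; last first.
    by rewrite (negbTE hl) mulr0.
  by rewrite eqxx mulr1 => /eqP; rewrite intr_eq0 => /eqP.
exists (lattice_pt tau m), (lattice_pt tau m'); split; first by exists m.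
split; first by exists m'.
split.
  rewrite det2.
  have -> : (0 : 'I_2) = lshift 1 (0 : 'I_1) by apply: val_inj.
  have -> : (1 : 'I_2) = rshift 1 (0 : 'I_1) by apply: val_inj.
  have sl : split (lshift 1 (0 : 'I_1)) = inl 0 := unsplitK (inl 0).
  have sr : split (rshift 1 (0 : 'I_1)) = inr 0 := unsplitK (inr 0).
  rewrite !mxE sl sr !Hl !Hl'; ring.
move=> a0 b0 Hab.
have ra : (a0%:C)%C \is Num.real by apply/complex_realP; exists a0.
have rb : (b0%:C)%C \is Num.real by apply/complex_realP; exists b0.
pose al := (a0%:C)%C * (m 0)%:~R + (b0%:C)%C * (m' 0)%:~R.
pose be := (a0%:C)%C * (m 1)%:~R + (b0%:C)%C * (m' 1)%:~R.
pose ga (r : 'I_2) : R[i] := ((a0%:C)%C * (m 2)%:~R + (b0%:C)%C * (m' 2)%:~R) * (r == 0)%:R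
   + ((a0%:C)%C * (m 3)%:~R + (b0%:C)%C * (m' 3)%:~R) * (r == 1)%:R.
have Er r : al * tau r 0 + be * tau r 1 + ga r = 0.
  have := congr1 (fun M : 'cV[R[i]]_2 => M r 0) Hab; rewrite !mxE !eqxx !andbT /al /be /ga => <-.
  ring.
have rga r : ga r \is Num.real by rewrite /ga !(rpredD, rpredM, realz, realn, ra, rb).
have [al0 be0] : al = 0 /\ be = 0.
  apply: (im_indep pm); [by rewrite /al !(rpredD, rpredM, realz, ra, rb) | by rewrite /be !(rpredD, rpredM, realz, ra, rb) | move=> r].
  have := Er r; rewrite addrC => /eqP; rewrite addr_eq0 => /eqP /(congr1 -%R); rewrite opprK => <-.
  by rewrite raddfN /=; apply/eqP; rewrite oppr_eq0; apply/eqP/Creal_ImP.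
have gl : forall l, (a0%:C)%C * (m l)%:~R + (b0%:C)%C * (m' l)%:~R = 0.
  apply: ord4_ind; [exact: al0 | exact: be0 | |].
  - have := Er 0; rewrite al0 be0 /ga !mul0r !add0r eqxx /=.
    by rewrite mulr0 addr0 mulr1.
  - have := Er 1; rewrite al0 be0 /ga !mul0r !add0r eqxx /=.
    by rewrite mulr0 add0r mulr1.
have a00 : a0 = 0.
  have := gl l0; rewrite m'0 mulr0 addr0 => /eqP; rewrite mulf_eq0 intr_eq0 (negbTE ml0) orbF.
  by rewrite fmorph_eq0 => /eqP.
split => //.
have := gl l1; rewrite a00 mul0r add0r => /eqP; rewrite mulf_eq0 intr_eq0 (negbTE ml1) orbF.
by rewrite fmorph_eq0 => /eqP.
Qed.
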